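(* Every bipartite circle graph has odd chromatic number at most $98$.
   Context: A graph is a circle graph if there is a collection of chords of a circle in bijection with its vertices such that two vertices are adjacent if and only if their chords intersect. The odd chromatic number of a graph $G$ is the minimum number of colors in a proper vertex coloring of $G$ such that for every non-isolated vertex $v$ some color appears on an odd number of vertices of the open neighborhood $N(v)$. *)

(* Defs.v *)
From mathcomp Require Import all_boot.
Set Implicit Arguments. Unset Strict Implicit. Unset Printing Implicit Defensive.

Definition simple_graph (T : finType) (e : rel T) : Prop :=
  (forall x y, e x y = e y x) /\ (forall x, ~~ e x x).

Definition bipartite (T : finType) (e : rel T) : Prop :=
  exists side : T -> bool, forall x y, e x y -> side x != side y.

(* We cut the circle at a point that is not an
   endpoint, so endpoints are positions on a line (natural numbers);
   a chord is the pair of its two endpoint positions. *)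
Definition inside (p : nat * nat) (x : nat) : bool :=
  (minn p.1 p.2 < x) && (x < maxn p.1 p.2).

(* Two chords with pairwise distinct endpoints intersect iff exactly one
   endpoint of q lies strictly inside p (their endpoints interleave). *)
Definition chords_cross (p q : nat * nat) : bool :=
  inside p q.1 (+) inside p q.2.

Definition endpoints (p : nat * nat) : seq nat := [:: p.1; p.2].

Definition circle_graph (T : finType) (e : rel T) : Prop :=
  exists f : T -> nat * nat,
    [/\ forall x, (f x).1 != (f x).2,
        forall x y, x != y -> all (fun a => a \notin endpoints (f y)) (endpoints (f x))
      & forall x y, x != y -> e x y = chords_cross (f x) (f y)].

Definition odd_coloring (T : finType) (e : rel T) (k : nat) (c : T -> 'I_k) : Prop :=
  (forall x y, e x y -> c x != c y) /\
  (forall v, (exists u, e v u) ->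
     exists i : 'I_k, odd #|[set u | e v u & c u == i]|).

Definition odd_chromatic_le (T : finType) (e : rel T) (k : nat) : Prop :=
  exists c : T -> 'I_k, odd_coloring e c.

(* Main.v *)
Require Import Defs.
From mathcomp Require Import all_boot all_algebra zify.
Set Implicit Arguments. Unset Strict Implicit. Unset Printing Implicit Defensive.
Import GRing.Theory.

Notation G := 'rV['F_2]_5.

Lemma G2 (g : G) : (g + g = 0)%R.
Proof.
rewrite -mulr2n -scaler_nat.
have -> : (2%:R : 'F_2)%R = 0%R by apply: val_inj.
by rewrite scale0r.
Qed.

Lemma cardG : #|G| = 32.
Proof. by rewrite card_mx card_Fp. Qed.

Section Core.
Variable T : finType.
Variables lo hi : T -> nat.
Variable B : {set T}.
Hypothesis lohi : forall x, lo x < hi x.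
Hypothesis dist : forall x y, x != y ->
  [/\ lo x != lo y, lo x != hi y, hi x != lo y & hi x != hi y].
Hypothesis ncB : forall x y, x \in B -> y \in B ->
  lo x < lo y -> lo y < hi x -> hi x < hi y -> False.

Definition C p := [set b in B | lo b < p < hi b].

Lemma inC b p : (b \in C p) = (b \in B) && (lo b < p < hi b).
Proof. by rewrite inE. Qed.

Lemma C_conv b x y z : b \in C x -> b \in C z -> x <= y -> y <= z -> b \in C y.
Proof.
rewrite !inC => /andP[bB /andP[h1 h2]] /andP[_ /andP[h3 h4]] h5 h6.
rewrite bB /=; apply/andP; split; lia.
Qed.

Lemma innermost x c : c \in C x -> (forall b, b \in C x -> lo b <= lo c) ->
  C x = c |: C (lo c).
Proof.
move=> cx hmax; apply/setP => b; rewrite in_setU1.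
case: (eqVneq b c) => [->|nbc] /=; first by rewrite cx.
have [d1 d2 d3 d4] := dist nbc.
apply/idP/idP.
- move=> bx; have := hmax _ bx.
  move: cx bx; rewrite !inC => /andP[cB /andP[? ?]] /andP[bB /andP[? ?]] ?.
  rewrite bB /=; apply/andP; split; lia.
- rewrite !inC => /andP[bB /andP[h1 h2]].
  move: cx; rewrite inC => /andP[cB /andP[h3 h4]].
  rewrite bB /=.
  have : ~ (hi b < hi c) by move=> h; exact: (ncB bB cB).
  move=> h; apply/andP; split; lia.
Qed.

Section Tele.
Variable phi : {set T} -> G.
Definition lam b := (phi (b |: C (lo b)) + phi (C (lo b)))%R.

Lemma tele x : (\sum_(b in C x) lam b = phi (C x) + phi set0)%R.
Proof.
move: {2}#|C x| (leqnn #|C x|) => n; elim: n x => [|n IH] x hn.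
  have e : C x = set0 by apply: cards0_eq; lia.
  by rewrite e big_set0 G2.
case: (set_0Vmem (C x)) => [e|[c0 c0x]]; first by rewrite e big_set0 G2.
case: (arg_maxnP lo c0x) => c cx cmax.
have ex := innermost cx cmax.
have cn : c \notin C (lo c) by rewrite inC ltnn andbF.
have hlt : #|C (lo c)| <= n.
  have : #|C x| = (#|C (lo c)|).+1 by rewrite ex cardsU1 cn.
  lia.
rewrite {1}ex big_setU1 //= IH // /lam -ex.
by rewrite addrA -(addrA (phi (C x))) G2 addr0.
Qed.
End Tele.

Lemma sumxor (F : T -> G) (p q : nat) :
  (\sum_(b in B | (lo b < p < hi b)%N (+) (lo b < q < hi b)%N) F b =
   \sum_(b in C p) F b + \sum_(b in C q) F b)%R.
Proof.
rewrite [in RHS]big_mkcond [X in (_ + X)%R]big_mkcond -big_split /= big_mkcond.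
apply: eq_bigr => b _; rewrite !inC.
case: (b \in B); case: (lo b < p < hi b); case: (lo b < q < hi b) => /=;
  by rewrite ?addr0 ?add0r ?G2.
Qed.

Variable A : {set T}.
Hypothesis ncA : forall x y, x \in A -> y \in A ->
  lo x < lo y -> lo y < hi x -> hi x < hi y -> False.

Section Deg.
Variable A' : {set T}.
Hypothesis sA : A' \subset A.
Hypothesis rel : forall a, a \in A' -> C (lo a) != C (hi a).

Definition P : {set T * bool} := [set q : T * bool | q.1 \in A'].
Definition pos (q : T * bool) := if q.2 then hi q.1 else lo q.1.

Lemma pos_inj : injective pos.
Proof.
move=> [a s] [a' s'] /=; rewrite /pos /=.
case: (eqVneq a a') => [<-|/dist [d1 d2 d3 d4]].
  case: s; case: s' => //= h; have := lohi a; lia.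
case: s; case: s' => //= h; lia.
Qed.

Definition prd q := [pick q' in P | (pos q' < pos q) &&
   [forall q'' in P, ~~ ((pos q' < pos q'') && (pos q'' < pos q))]].

Lemma prdP q q' : prd q = Some q' ->
  [/\ q' \in P, pos q' < pos q &
      forall q'', q'' \in P -> pos q'' < pos q -> pos q'' <= pos q'].
Proof.
rewrite /prd; case: pickP => // x /andP[xP /andP[lt /forall_inP H]] [<-].
split=> // q'' q''P lt2; have := H _ q''P.
by rewrite lt2 andbT -leqNgt.
Qed.

Lemma prd_ex q q0 : q0 \in P -> pos q0 < pos q -> exists q', prd q = Some q'.
Proof.
move=> q0P lt0; rewrite /prd; case: pickP => [x _|H]; first by exists x.
exfalso.
have P0 : (q0 \in P) && (pos q0 < pos q) by rewrite q0P lt0.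
case: (@arg_maxnP _ q0 (fun x => (x \in P) && (pos x < pos q)) pos P0) => m /andP[mP mlt] mmax.
have := H m; rewrite mP mlt /=.
suff -> : [forall q'' in P, ~~ ((pos m < pos q'') && (pos q'' < pos q))] by [].
apply/forall_inP => q'' q''P; apply/negP => /andP[h1 h2].
have := mmax q'' (introT andP (conj q''P h2)); lia.
Qed.

Definition trans q := (q \in P) &&
  (if prd q is Some q' then C (pos q') != C (pos q) else false).
Definition Tr := [set q | trans q].
Definition ri (x : nat) := #|[set q in Tr | pos q <= x]|.
Definition S := [set C (pos q) | q in P].

Lemma ri_mono x y : x <= y -> ri x <= ri y.
Proof.
move=> h; apply: subset_leq_card; apply/subsetP => q; rewrite !inE.
by case/andP => -> h2 /=; apply: leq_trans h.
Qed.

Lemma ri_lt x y : ri x < ri y -> x < y.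
Proof. move=> h; rewrite ltnNge; apply/negP => /ri_mono; lia. Qed.

Lemma ri_le x : ri x <= #|Tr|.
Proof. by apply: subset_leq_card; apply/subsetP => q; rewrite !inE => /andP[]. Qed.

Lemma ri_step p p' : p \in P -> p' \in P -> pos p < pos p' ->
  C (pos p) != C (pos p') -> ri (pos p) < ri (pos p').
Proof.
move=> pP p'P lt neq.
pose Q := fun q => [&& q \in P, pos p < pos q & C (pos q) != C (pos p)].
have Qp' : Q p' by rewrite /Q p'P lt eq_sym neq.
case: (arg_minnP pos Qp') => q /and3P[qP ltq nq] qmin.
have [q' hq'] := prd_ex pP ltq.
have [q'P q'lt q'max] := prdP hq'.
have pq' : pos p <= pos q' := q'max _ pP ltq.
have Cq' : C (pos q') = C (pos p).
  case: (ltnP (pos p) (pos q')) => h.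
    apply/eqP; apply: contraT => hn.
    have := qmin q' (introT and3P (And3 q'P h hn)); lia.
  by have -> : pos q' = pos p by lia.
have trq : q \in Tr by rewrite inE /trans qP hq' Cq' eq_sym.
have qp' := qmin p' Qp'.
rewrite /ri; apply: proper_card; apply/properP; split.
  apply/subsetP => z; rewrite !inE => /andP[-> h] /=; lia.
exists q; first by rewrite inE trq qp'.
by rewrite inE trq /= -ltnNge.
Qed.

Lemma ri_eqC p p' : p \in P -> p' \in P -> ri (pos p) = ri (pos p') ->
  C (pos p) = C (pos p').
Proof.
move=> pP p'P; case: (ltngtP (pos p) (pos p')) => h e.
- apply/eqP; apply: contraT => n; have := ri_step pP p'P h n; lia.
- apply/eqP; apply: contraT => n; rewrite eq_sym in n.
  have := ri_step p'P pP h n; lia.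
- by rewrite h.
Qed.

Definition tmap q : bool * {set T} :=
  if prd q is Some q' then
    (if [exists b, (b \in C (pos q)) && (b \notin C (pos q'))]
     then (true, C (pos q)) else (false, C (pos q')))
  else (false, set0).

Lemma tmap_lt q1 q2 : q1 \in Tr -> q2 \in Tr -> pos q1 < pos q2 ->
  tmap q1 = tmap q2 -> False.
Proof.
rewrite !inE /trans => /andP[q1P]; case e1: (prd q1) => [p1|] // n1.
case/andP=> q2P; case e2: (prd q2) => [p2|] // n2 lt.
have [p1P p1lt _] := prdP e1; have [p2P p2lt p2max] := prdP e2.
have q1p2 : pos q1 <= pos p2 := p2max _ q1P lt.
rewrite /tmap e1 e2.
case: ifP => [/existsP[b /andP[b1 b1']] | ne1];
  case: ifP => [/existsP[b' /andP[b2 b2']] | ne2] // [eC].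
- apply: (negP b2'); apply: (@C_conv _ (pos q1) _ (pos q2)) => //.
    by rewrite eC.
  lia.
- have : ~~ (C (pos p1) \subset C (pos q1)).
    apply/negP => sub; move: n1; rewrite eqEsubset sub /=.
    apply/negP; rewrite negbK; apply/subsetP => z zq.
    apply: contraFT ne1 => zn; apply/existsP; exists z; by rewrite zq zn.
  case/subsetPn => z zp1 zq1.
  apply: (negP zq1); apply: (@C_conv _ (pos p1) _ (pos p2)) => //.
    by rewrite -eC.
  lia.
Qed.

Lemma card_Tr : #|Tr| <= 2 * #|S|.
Proof.
have inj : {in Tr &, injective tmap}.
  move=> q1 q2 h1 h2 e; case: (ltngtP (pos q1) (pos q2)) => h.
  - by exfalso; exact: (tmap_lt h1 h2 h e).
  - by exfalso; exact: (tmap_lt h2 h1 h (esym e)).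
  - exact: pos_inj h.
rewrite -(card_in_imset inj).
apply: leq_trans (_ : #|setX [set: bool] S| <= _); last by rewrite cardsX cardsT card_bool.
apply: subset_leq_card; apply/subsetP => _ /imsetP[q qTr ->].
move: qTr; rewrite !inE /trans => /andP[qP]; rewrite /tmap.
case e: (prd q) => [p|] // _.
have [pP _ _] := prdP e.
by case: ifP => _; apply: imset_f.
Qed.

Definition Dr := [set (C (lo a), C (hi a)) | a in A'].
Definition ia a := ri (lo a).
Definition ja a := ri (hi a).

Lemma inP0 a : a \in A' -> (a, false) \in P. Proof. by rewrite inE. Qed.
Lemma inP1 a : a \in A' -> (a, true) \in P. Proof. by rewrite inE. Qed.

Lemma iaja a : a \in A' -> ia a < ja a.
Proof.
move=> aA; exact: (ri_step (inP0 aA) (inP1 aA) (lohi a) (rel aA)).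
Qed.

Lemma runC a a' : a \in A' -> a' \in A' -> ia a = ia a' -> ja a = ja a' ->
  (C (lo a), C (hi a)) = (C (lo a'), C (hi a')).
Proof.
move=> aA a'A e1 e2.
by rewrite (ri_eqC (inP0 aA) (inP0 a'A) e1) (ri_eqC (inP1 aA) (inP1 a'A) e2).
Qed.

Definition Ex i k := [exists a in A', (ia a == i) && (ja a == k)].
Definition wit i j := \max_(k < j | (i < k) && (((k : nat) == i.+1) || Ex i k)) (k : nat).

Lemma wit_spec i j : i.+1 < j ->
  [/\ i < wit i j, wit i j < j, (wit i j == i.+1) || Ex i (wit i j) &
   forall k, k < j -> i < k -> (k == i.+1) || Ex i k -> k <= wit i j].
Proof.
move=> h.
pose Pk := fun k : 'I_j => (i < k) && (((k : nat) == i.+1) || Ex i k).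
have c0 : 0 < #|Pk|.
  by apply/card_gt0P; exists (Ordinal h); rewrite unfold_in /Pk /= ltnSn eqxx.
have [k0 hk0 e] := eq_bigmax_cond (fun k : 'I_j => (k : nat)) c0.
rewrite /wit -/Pk e; move: hk0; rewrite unfold_in /Pk => /andP[h1 h2]; split => //.
move=> k kj ik hk.
have := @leq_bigmax_cond _ Pk (fun k : 'I_j => (k : nat)) (Ordinal kj).
by rewrite -e /Pk /= ik hk => ->.
Qed.

Lemma long_lt a1 a2 : a1 \in A' -> a2 \in A' ->
  (ia a1).+1 < ja a1 -> (ia a2).+1 < ja a2 ->
  wit (ia a1) (ja a1) = wit (ia a2) (ja a2) -> ia a1 < ia a2 -> False.
Proof.
move=> a1A a2A l1 l2 ew lt.
have [s1 s2 s3 s4] := wit_spec l1.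
have [t1 t2 t3 t4] := wit_spec l2.
rewrite ew in s1 s2 s3 s4.
have : wit (ia a2) (ja a2) != (ia a1).+1 by apply/eqP => h; lia.
move=> nm; rewrite (negbTE nm) /= in s3.
case/exists_inP: s3 => a3 a3A /andP[/eqP e1 /eqP e2].
have h1 : lo a3 < lo a2 by apply: ri_lt; rewrite -/(ia a3) -/(ia a2); lia.
have h2 : lo a2 < hi a3 by apply: ri_lt; rewrite -/(ja a3) -/(ia a2); lia.
have h3 : hi a3 < hi a2 by apply: ri_lt; rewrite -/(ja a3) -/(ja a2); lia.
exact: (ncA (subsetP sA _ a3A) (subsetP sA _ a2A) h1 h2 h3).
Qed.

Lemma long_eqi a1 a2 : a1 \in A' -> a2 \in A' ->
  (ia a1).+1 < ja a1 -> (ia a2).+1 < ja a2 ->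
  wit (ia a1) (ja a1) = wit (ia a2) (ja a2) -> ia a1 = ia a2 ->
  ja a1 < ja a2 -> False.
Proof.
move=> a1A a2A l1 l2 ew ei lt.
have [s1 s2 s3 s4] := wit_spec l1.
have [t1 t2 t3 t4] := wit_spec l2.
have : ja a1 <= wit (ia a2) (ja a2).
  apply: t4 => //; first by have := iaja a1A; lia.
  apply/orP; right; apply/exists_inP; exists a1 => //; by rewrite ei !eqxx.
lia.
Qed.

Definition code d : bool * nat :=
  if [pick a in A' | (C (lo a), C (hi a)) == d] is Some a then
    (if ja a == (ia a).+1 then (false, ia a) else (true, wit (ia a) (ja a)))
  else (false, 0).

Lemma code_spec d : d \in Dr -> exists2 a, a \in A' &
  d = (C (lo a), C (hi a)) /\
  code d = (if ja a == (ia a).+1 then (false, ia a) else (true, wit (ia a) (ja a))).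
Proof.
case/imsetP => b bA ->; rewrite /code; case: pickP => [a /andP[aA /eqP e]|H].
  by exists a.
by have := H b; rewrite bA eqxx.
Qed.

Lemma code_inj : {in Dr &, injective code}.
Proof.
move=> d1 d2 /code_spec[a1 a1A [-> ->]] /code_spec[a2 a2A [-> ->]].
have h1 := iaja a1A; have h2 := iaja a2A.
case: eqP => s1; case: eqP => s2 // [].
  move=> ei; apply: runC => //; lia.
move=> ew.
have l1 : (ia a1).+1 < ja a1 by lia.
have l2 : (ia a2).+1 < ja a2 by lia.
case: (ltngtP (ia a1) (ia a2)) => hi1.
- by exfalso; exact: (long_lt a1A a2A l1 l2 ew hi1).
- by exfalso; exact: (long_lt a2A a1A l2 l1 (esym ew) hi1).
case: (ltngtP (ja a1) (ja a2)) => hj.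
- by exfalso; exact: (long_eqi a1A a2A l1 l2 ew hi1 hj).
- by exfalso; exact: (long_eqi a2A a1A l2 l1 (esym ew) (esym hi1) hj).
exact: runC.
Qed.

Lemma code_le d : d \in Dr -> (code d).2 <= #|Tr|.
Proof.
case/code_spec => a aA [_ ->]; have := iaja aA.
case: eqP => h /= lt; first exact: ri_le.
have l : (ia a).+1 < ja a by lia.
have [_ s2 _ _] := wit_spec l.
have := ri_le (hi a); move: s2; rewrite /ja => s2 s3; exact: leq_trans (ltnW s2) s3.
Qed.

Lemma card_Dr : #|Dr| <= 2 * (#|Tr|).+1.
Proof.
pose g := fun d => ((code d).1, (inord (code d).2 : 'I_(#|Tr|).+1)).
have inj : {in Dr &, injective g}.
  move=> d1 d2 h1 h2 [e1 e2]; apply: code_inj => //.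
  move/(congr1 (@nat_of_ord _)): e2; rewrite !inordK ?ltnS ?code_le // => e3.
  by case: (code d1) (code d2) e1 e3 => ? ? [? ?] /= -> ->.
rewrite -(card_in_imset inj).
apply: leq_trans (max_card _) _.
by rewrite card_prod card_bool card_ord.
Qed.

Definition part y := [set w | ((y, w) \in Dr) || ((w, y) \in Dr)].

Lemma part_le y : #|part y| <=
  #|[set d in Dr | d.1 == y]| + #|[set d in Dr | d.2 == y]|.
Proof.
apply: leq_trans (_ : #|[set d.2 | d in [set d in Dr | d.1 == y]] :|:
                      [set d.1 | d in [set d in Dr | d.2 == y]]| <= _).
  apply: subset_leq_card; apply/subsetP => w; rewrite inE => /orP[h|h].
    by apply/setUP; left; apply/imsetP; exists (y, w); rewrite // inE h eqxx.
  by apply/setUP; right; apply/imsetP; exists (w, y); rewrite // inE h eqxx.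
apply: leq_trans (leq_card_setU _ _) _.
by apply: leq_add; apply: leq_imset_card.
Qed.

Lemma sum_fst : \sum_y #|[set d in Dr | d.1 == y]| = #|Dr|.
Proof.
rewrite -sum1_card (partition_big fst predT) //.
by apply: eq_bigr => y _; rewrite -sum1_card; apply: eq_bigl => d; rewrite inE.
Qed.

Lemma sum_snd : \sum_y #|[set d in Dr | d.2 == y]| = #|Dr|.
Proof.
rewrite -sum1_card (partition_big snd predT) //.
by apply: eq_bigr => y _; rewrite -sum1_card; apply: eq_bigl => d; rewrite inE.
Qed.

Lemma deg : A' != set0 -> exists2 y, y \in S & #|part y| <= 12.
Proof.
move=> ne.
case: (boolP [exists y in S, #|part y| <= 12]) => [/exists_inP[y ? ?]|/exists_inPn H].
  by exists y.
exfalso.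
case: (set_0Vmem A') => [e|[a aA]]; first by rewrite e eqxx in ne.
have Sne : 0 < #|S|.
  by apply/card_gt0P; exists (C (pos (a, false))); apply: imset_f; rewrite inE.
have h1 : 13 * #|S| <= \sum_(y in S) #|part y|.
  rewrite mulnC -sum_nat_const; apply: leq_sum => y yS.
  by have := H y yS; rewrite -ltnNge.
have h2 : \sum_(y in S) #|part y| <=
   \sum_y (#|[set d in Dr | d.1 == y]| + #|[set d in Dr | d.2 == y]|).
  rewrite big_mkcond /=; apply: leq_sum => y _; case: ifP => _ //.
  exact: part_le.
rewrite big_split /= sum_fst sum_snd in h2.
have h3 := leq_trans h1 h2; move: h3 Sne; have := card_Dr; have := card_Tr; lia.
Qed.

End Deg.
Lemma greedy (A' : {set T}) : A' \subset A -> (forall a, a \in A' -> C (lo a) != C (hi a)) ->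
  exists phi : {set T} -> G, forall a, a \in A' -> phi (C (lo a)) != phi (C (hi a)).
Proof.
move: {2}#|A'| (leqnn #|A'|) => n; elim: n A' => [|n IH] A' hn sA rel.
  have -> : A' = set0 by apply: cards0_eq; lia.
  by exists (fun _ => 0%R) => a; rewrite inE.
case: (eqVneq A' set0) => [->|ne]; first by exists (fun _ => 0%R) => a; rewrite inE.
have [y yS hy] := deg sA rel ne.
pose A'' := [set a in A' | (C (lo a) != y) && (C (hi a) != y)].
have sub : A'' \subset A' by apply/subsetP => a; rewrite inE => /andP[].
have lt : #|A''| < #|A'|.
  apply: proper_card; apply/properP; split => //.
  case/imsetP: yS => [[a0 s0]]; rewrite inE /= => a0A ey.
  exists a0 => //; rewrite /A'' inE a0A ey /= /pos; by case: (s0); rewrite eqxx ?andbF.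
have hn' : #|A''| <= n by lia.
have [phi hphi] := IH A'' hn' (subset_trans sub sA)
   (fun a h => rel a (subsetP sub a h)).
pose F := [set phi w | w in part A' y].
have [g hg] : exists g, g \notin F.
  case: (pickP (fun g => g \notin F)) => [g hg|H]; first by exists g.
  exfalso.
  have : #|[set: G]| <= #|F|.
    by apply: subset_leq_card; apply/subsetP => g _; have := H g; rewrite /= => /negbFE.
  rewrite cardsT cardG.
  move=> h; have := leq_trans h (leq_imset_card phi (part A' y)); move: hy; lia.
exists (fun K => if K == y then g else phi K) => a aA.
case: (eqVneq (C (lo a)) y) => [e1|n1]; case: (eqVneq (C (hi a)) y) => [e2|n2].
- by have := rel a aA; rewrite e1 e2 eqxx.
- apply: contraNneq hg => ->; apply: imset_f.
  by rewrite inE; apply/orP; left; rewrite -e1; apply: imset_f.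
- rewrite eq_sym; apply: contraNneq hg => ->; apply: imset_f.
  by rewrite inE; apply/orP; right; rewrite -e2; apply: imset_f.
- by apply: hphi; rewrite inE aA n1 n2.
Qed.

Lemma core_lab : exists lam0 : T -> G, forall a, a \in A -> C (lo a) != C (hi a) ->
  (\sum_(b in B | (lo b < lo a < hi b)%N (+) (lo b < hi a < hi b)%N) lam0 b != 0)%R.
Proof.
have s1 : [set a in A | C (lo a) != C (hi a)] \subset A.
  by apply/subsetP => a; rewrite inE => /andP[].
have s2 : forall a, a \in [set a in A | C (lo a) != C (hi a)] -> C (lo a) != C (hi a).
  by move=> a; rewrite inE => /andP[].
have [phi hphi] := greedy s1 s2.
exists (lam phi) => a aA ne.
rewrite sumxor !tele.
rewrite addrACA G2 addr0.
have ha : a \in [set a in A | C (lo a) != C (hi a)] by rewrite inE aA ne.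
apply: contra (hphi a ha).
rewrite addr_eq0 => /eqP ->.
by rewrite eq_sym -addr_eq0 G2.
Qed.

End Core.

Lemma xsym a b c d : a < b -> c < d -> a != c -> a != d -> b != c -> b != d ->
  ((a < c < b) (+) (a < d < b)) = ((c < a < d) (+) (c < b < d)).
Proof.
move=> *.
case: (ltnP a c) => ?; case: (ltnP c b) => ?; case: (ltnP a d) => ?; case: (ltnP d b) => ?;
case: (ltnP c a) => ?; case: (ltnP a d) => ?; case: (ltnP b d) => ?;
rewrite //=; exfalso; lia.
Qed.

Lemma odd_ex (T : finType) (X : {set T}) (F : T -> G) :
  (\sum_(b in X) F b != 0)%R -> exists g, odd #|[set b in X | F b == g]|.
Proof.
move=> ne.
case: (boolP [exists g, odd #|[set b in X | F b == g]|]) => [/existsP[g h]|/existsPn H].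
  by exists g.
exfalso; move: ne; apply/negP; rewrite negbK.
rewrite (partition_big F predT) //= big1 // => g _.
rewrite (eq_bigr (fun _ => g)); last by move=> b /andP[_ /eqP].
rewrite (eq_bigl (mem [set b in X | F b == g])); last by move=> b /=; rewrite inE.
rewrite sumr_const.
have := H g; set k := #|_| => ok.
rewrite -(odd_double_half k) (negbTE ok) add0n -muln2 mulrnA mulr2n G2.
done.
Qed.

Definition lof (T : Type) (f : T -> nat * nat) x := minn (f x).1 (f x).2.
Definition hif (T : Type) (f : T -> nat * nat) x := maxn (f x).1 (f x).2.

Theorem corollary1p6 (T : finType) (e : rel T) :
  simple_graph e -> bipartite e -> circle_graph e -> odd_chromatic_le e 98.
Proof.
move=> [esy eirr] [side hside] [f [hf1 hf2 hf3]].
have lohi : forall x, lof f x < hif f x.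
  by move=> x; have := hf1 x; rewrite /lof /hif; lia.
have dist : forall x y, x != y -> [/\ lof f x != lof f y, lof f x != hif f y,
    hif f x != lof f y & hif f x != hif f y].
  move=> x y /hf2; rewrite /endpoints /= !inE !negb_or andbT.
  by case/andP => /andP[h1 h2] /andP[h3 h4]; rewrite /lof /hif; split; lia.
have ecross : forall x y, x != y -> e x y =
    (lof f y < lof f x < hif f y) (+) (lof f y < hif f x < hif f y).
  move=> x y nxy; rewrite hf3 // /chords_cross /inside -/(lof f x) -/(hif f x).
  have [d1 d2 d3 d4] := dist _ _ nxy.
  rewrite -(xsym (lohi x) (lohi y)) //.
  by rewrite /lof /hif; case: (leqP (f y).1 (f y).2) => h //; rewrite addbC.
have nc : forall x y, side x = side y -> lof f x < lof f y -> lof f y < hif f x ->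
    hif f x < hif f y -> False.
  move=> x y hs h1 h2 h3.
  have nxy : x != y by apply/eqP => exy; rewrite exy ltnn in h1.
  have : e x y.
    rewrite ecross // (_ : (lof f y < lof f x < hif f y) = false) /=.
      by rewrite h2 h3.
    by apply/negbTE/negP => /andP[? ?]; lia.
  by move/hside; rewrite hs eqxx.
have labs : forall s : bool, exists lam0 : T -> G, forall a,
    a \in [set x | side x == s] ->
    C (lof f) (hif f) [set x | side x != s] (lof f a) !=
    C (lof f) (hif f) [set x | side x != s] (hif f a) ->
    (\sum_(b in [set x | side x != s] |
       (lof f b < lof f a < hif f b)%N (+) (lof f b < hif f a < hif f b)%N) lam0 b != 0)%R.
  move=> s; apply: core_lab => //.
    move=> x y; rewrite !inE => hx hy; apply: nc.
    by move: hx hy; case: (side x); case: (side y); case: s.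
  move=> x y; rewrite !inE => hx hy; apply: nc.
  by rewrite (eqP hx) (eqP hy).
have [L0 hL0] := labs false; have [L1 hL1] := labs true.
pose L (s : bool) := if s then L1 else L0.
have hL : forall s a, side a == s ->
    C (lof f) (hif f) [set x | side x != s] (lof f a) !=
    C (lof f) (hif f) [set x | side x != s] (hif f a) ->
    (\sum_(b in [set x | side x != s] |
       (lof f b < lof f a < hif f b)%N (+) (lof f b < hif f a < hif f b)%N) L s b != 0)%R.
  by move=> [] a ha; [apply: hL1 | apply: hL0]; rewrite inE.
have hr : forall g : G, enum_rank g < 32 by move=> g; rewrite -cardG; exact: ltn_ord.
pose c x : 'I_98 := inord ((if side x then 32 else 0) + enum_rank (L (~~ side x) x)).
have cval : forall x, (c x : nat) = (if side x then 32 else 0) + enum_rank (L (~~ side x) x).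
  move=> x; rewrite inordK //; have := hr (L (~~ side x) x); case: (side x); lia.
exists c; split.
  move=> x y exy; have := hside _ _ exy.
  apply: contra => /eqP /(congr1 (@nat_of_ord _)); rewrite !cval.
  have := hr (L (~~ side x) x); have := hr (L (~~ side y) y).
  by case: (side x); case: (side y) => //; lia.
move=> v [u evu].
pose Bs := [set x | side x != side v].
have key : forall w, e v w = (w \in Bs) &&
    ((lof f w < lof f v < hif f w) (+) (lof f w < hif f v < hif f w)).
  move=> w; case: (eqVneq w v) => [->|nwv].
    by rewrite (negbTE (eirr v)) inE eqxx.
  rewrite inE; case: (eqVneq (side w) (side v)) => hs /=.
    by apply/negbTE/negP => h; have := hside _ _ h; rewrite hs eqxx.
  by rewrite ecross // eq_sym.
have neC : C (lof f) (hif f) Bs (lof f v) != C (lof f) (hif f) Bs (hif f v).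
  apply/negP => /eqP eC.
  have : (u \in C (lof f) (hif f) Bs (lof f v)) = (u \in C (lof f) (hif f) Bs (hif f v)).
    by rewrite eC.
  rewrite !inC; move: evu; rewrite key => /andP[-> /=].
  by case: (lof f u < lof f v < hif f u); case: (lof f u < hif f v < hif f u).
set X := [set b in Bs | (lof f b < lof f v < hif f b) (+) (lof f b < hif f v < hif f b)].
have hsum : (\sum_(b in X) L (side v) b != 0)%R.
  rewrite (_ : (\sum_(b in X) L (side v) b)%R = (\sum_(b in [set x | side x != side v] |
       (lof f b < lof f v < hif f b)%N (+) (lof f b < hif f v < hif f b)%N) L (side v) b)%R).
    exact: hL (side v) v (eqxx _) neC.
  by apply: eq_bigl => b; rewrite !inE.
move: hsum.
case/odd_ex => g og.
exists (inord ((if side v then 0 else 32) + enum_rank g)).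
rewrite (_ : [set u | e v u & c u == _] = [set b in X | L (side v) b == g]) //.
apply/setP => w; rewrite !inE key /Bs !inE.
case: (eqVneq (side w) (side v)) => hs /=; first by [].
case: ((lof f w < lof f v < hif f w) (+) (lof f w < hif f v < hif f w)) => //=.
have sw : side w = ~~ side v by move: hs; case: (side w); case: (side v).
have hg := hr g.
rewrite -val_eqE /= cval inordK; last first.
  case: (side v) => /=; first exact: leq_trans hg _.
  by rewrite -[98]/(32 + 66) ltn_add2l; exact: leq_trans hg _.
rewrite sw negbK; case: (side v) => /=; rewrite ?eqn_add2l.
  by rewrite val_eqE (inj_eq enum_rank_inj).
by rewrite val_eqE (inj_eq enum_rank_inj).
Qed.
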